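(* Let $T$ be a complete first-order theory, $k<\omega$, and $\varphi(x,y)$ a formula. Then $T$ has an infinite $k$-grid for $\varphi(x,y)$ if and only if $T$ has an infinite strong $k$-grid for $\varphi(x,y)$.
   Context: For a linear order $L$, $L^2$ carries the product partial order: $(i,j)\le(k,\ell)$ iff $i\le k$ and $j\le\ell$. A chain is a set of pairwise comparable elements; a strict chain is a set $C$ such that any two distinct elements $x,y\in C$ satisfy $x<y$ or $y<x$; an antichain is a set of pairwise incomparable elements. A $k$-grid for $\varphi(x,y)$ indexed by $L$ is a family $(b_{i,j}:i,j\in L)$ of parameters in a model of $T$ such that for every strict chain $C\subseteq L^2$, $\{\varphi(x,b_{i,j}):(i,j)\in C\}$ is consistent, and for every antichain $A\subseteq L^2$, $\{\varphi(x,b_{i,j}):(i,j)\in A\}$ is $k$-inconsistent. It is a strong $k$-grid if moreover $\{\varphi(x,b_{i,j}):(i,j)\in C\}$ is consistent for every chain $C\subseteq L^2$. An infinite (strong) $k$-grid is one indexed by some infinite $L$. *)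

(* Defs.v *)
From Stdlib Require Import List Arith Fin.
Import ListNotations.

Set Implicit Arguments.

Record signature : Type := {
  func : Type;
  func_ar : func -> nat;
  rel : Type;
  rel_ar : rel -> nat
}.

Section FOL.
Variable S : signature.

Inductive term : Type :=
| tvar : nat -> term
| tapp : forall f : func S, (Fin.t (func_ar S f) -> term) -> term.

Inductive formula : Type :=
| fbot : formula
| feq : term -> term -> formula
| frel : forall r : rel S, (Fin.t (rel_ar S r) -> term) -> formula
| fimp : formula -> formula -> formula
| fand : formula -> formula -> formula
| f_or : formula -> formula -> formula
| fex : nat -> formula -> formula
| fall : nat -> formula -> formula.

Definition fneg (p : formula) : formula := fimp p fbot.

Fixpoint occurs_term (v : nat) (t : term) : Prop :=
  match t with
  | tvar n => n = v
  | tapp f args => exists i, occurs_term v (args i)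
  end.

Fixpoint free_in (v : nat) (p : formula) : Prop :=
  match p with
  | fbot => False
  | feq t1 t2 => occurs_term v t1 \/ occurs_term v t2
  | frel r args => exists i, occurs_term v (args i)
  | fimp p1 p2 | fand p1 p2 | f_or p1 p2 => free_in v p1 \/ free_in v p2
  | fex w q | fall w q => w <> v /\ free_in v q
  end.

Definition sentence (p : formula) : Prop := forall v, ~ free_in v p.

Record structure : Type := {
  dom :> Type;
  dom_inhabited : dom;   (* first-order structures are nonempty *)
  interp_f : forall f : func S, (Fin.t (func_ar S f) -> dom) -> dom;
  interp_r : forall r : rel S, (Fin.t (rel_ar S r) -> dom) -> Prop
}.

Definition update (M : Type) (a : nat -> M) (v : nat) (d : M) : nat -> M :=
  fun w => if Nat.eqb w v then d else a w.

Fixpoint eval (M : structure) (a : nat -> M) (t : term) : M :=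
  match t with
  | tvar n => a n
  | tapp f args => interp_f M f (fun i => eval M a (args i))
  end.

Fixpoint sat (M : structure) (a : nat -> M) (p : formula) : Prop :=
  match p with
  | fbot => False
  | feq t1 t2 => eval M a t1 = eval M a t2
  | frel r args => interp_r M r (fun i => eval M a (args i))
  | fimp p1 p2 => sat M a p1 -> sat M a p2
  | fand p1 p2 => sat M a p1 /\ sat M a p2
  | f_or p1 p2 => sat M a p1 \/ sat M a p2
  | fex v q => exists d : M, sat M (update a v d) q
  | fall v q => forall d : M, sat M (update a v d) q
  end.

Definition theory := formula -> Prop.

Definition is_model (M : structure) (T : theory) : Prop :=
  forall p, T p -> forall a : nat -> M, sat M a p.

Definition entails (T : theory) (p : formula) : Prop :=
  forall M : structure, is_model M T -> forall a : nat -> M, sat M a p.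

Definition complete_theory (T : theory) : Prop :=
  (forall p, T p -> sentence p) /\
  (exists M : structure, is_model M T) /\
  (forall s, sentence s -> entails T s \/ entails T (fneg s)).

End FOL.

Definition linear_order (L : Type) (le : L -> L -> Prop) : Prop :=
  (forall i, le i i) /\
  (forall i j, le i j -> le j i -> i = j) /\
  (forall i j l, le i j -> le j l -> le i l) /\
  (forall i j, le i j \/ le j i).

Definition infinite_type (L : Type) : Prop :=
  exists f : nat -> L, forall n n', f n = f n' -> n = n'.

Section Grid.
Variables (L : Type) (le : L -> L -> Prop).

Definition lt_L (i j : L) : Prop := le i j /\ i <> j.

Definition ple (p q : L * L) : Prop := le (fst p) (fst q) /\ le (snd p) (snd q).
Definition plt (p q : L * L) : Prop := lt_L (fst p) (fst q) /\ lt_L (snd p) (snd q).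

Definition is_chain (C : L * L -> Prop) : Prop :=
  forall p q, C p -> C q -> ple p q \/ ple q p.

Definition is_strict_chain (C : L * L -> Prop) : Prop :=
  forall p q, C p -> C q -> p <> q -> plt p q \/ plt q p.

Definition is_antichain (A : L * L -> Prop) : Prop :=
  forall p q, A p -> A q -> p <> q -> ~ ple p q /\ ~ ple q p.

Variables (S : signature) (M : structure S) (n : nat) (phi : formula S)
          (b : L * L -> nat -> M).

(* The assignment interpreting x = (x_0..x_{n-1}) as a and y = (y_0,..) as c:
   variable v < n is x_v, variable n + w is y_w. *)
Definition inst (a c : nat -> M) : nat -> M :=
  fun v => if Nat.ltb v n then a v else c (v - n).

(* {phi(x, b_p) : p in C} is consistent (with the elementary diagram of M),
   i.e. finitely satisfiable in M. *)
Definition consistent_family (C : L * L -> Prop) : Prop :=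
  forall F : list (L * L), (forall p, In p F -> C p) ->
    exists a : nat -> M, forall p, In p F -> sat M (inst a (b p)) phi.

Definition k_inconsistent_family (k : nat) (A : L * L -> Prop) : Prop :=
  forall F : list (L * L), NoDup F -> length F = k -> (forall p, In p F -> A p) ->
    ~ exists a : nat -> M, forall p, In p F -> sat M (inst a (b p)) phi.

Definition is_k_grid (k : nat) : Prop :=
  (forall C, is_strict_chain C -> consistent_family C) /\
  (forall A, is_antichain A -> k_inconsistent_family k A).

Definition is_strong_k_grid (k : nat) : Prop :=
  is_k_grid k /\ (forall C, is_chain C -> consistent_family C).

End Grid.

Definition has_infinite_k_grid (S : signature) (T : theory S) (k n : nat)
  (phi : formula S) : Prop :=
  exists (L : Type) (le : L -> L -> Prop), linear_order le /\ infinite_type L /\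
  exists (M : structure S) (b : L * L -> nat -> M),
    is_model M T /\ is_k_grid le M n phi b k.

Definition has_infinite_strong_k_grid (S : signature) (T : theory S) (k n : nat)
  (phi : formula S) : Prop :=
  exists (L : Type) (le : L -> L -> Prop), linear_order le /\ infinite_type L /\
  exists (M : structure S) (b : L * L -> nat -> M),
    is_model M T /\ is_strong_k_grid le M n phi b k.

(* Main.v *)
Require Import Defs.
From Stdlib Require Import List Arith Lia Classical ClassicalEpsilon FunctionalExtensionality PropExtensionality ProofIrrelevance.
Import ListNotations.

Module UF.
From mathcomp Require Import all_boot classical_sets boolp filter.
Lemma nat_ultra : exists U : (nat -> Prop) -> Prop,
  U (fun _ => True) /\
  (forall A B, U A -> U B -> U (fun t => A t /\ B t)) /\
  (forall (A B : nat -> Prop), (forall t, A t -> B t) -> U A -> U B) /\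
  ~ U (fun _ => False) /\
  (forall A, U A \/ U (fun t => ~ A t)) /\
  (forall N, U (fun t => N <= t)%coq_nat).
Proof.
have [G [UG sub]] := ultraFilterLemma eventually_filter.
have PG : ProperFilter G by exact: ultra_proper.
exists G; split; first by apply: (@filterT _ G).
split; first by move=> A B; exact: (@filterI _ G _ A B).
split; first by move=> A B AB GA; exact: (@filterS _ G _ A B AB GA).
split; first by move=> H; have [? []] := @filter_ex _ G _ set0 H.
split; first by move=> A; exact: (in_ultra_setVsetC A UG).
move=> N; apply: sub; exists N => // n /= /leP.
done.
Qed.
End UF.

Section Ultra.
Variable U : (nat -> Prop) -> Prop.
Hypothesis UT : U (fun _ => True).
Hypothesis UI : forall A B, U A -> U B -> U (fun t => A t /\ B t).
Hypothesis US : forall (A B : nat -> Prop), (forall t, A t -> B t) -> U A -> U B.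
Hypothesis UF0 : ~ U (fun _ => False).
Hypothesis UC : forall A, U A \/ U (fun t => ~ A t).

Lemma U_all (A : nat -> Prop) : (forall t, A t) -> U A.
Proof. intro H; apply (US (fun _ => True)); auto. Qed.

Lemma U_iff (A B : nat -> Prop) : U (fun t => A t <-> B t) -> (U A <-> U B).
Proof.
  intros H; split; intro HA.
  - apply (US _ _ (fun t (h : (A t <-> B t) /\ A t) => proj1 (proj1 h) (proj2 h)) (UI _ _ H HA)).
  - apply (US _ _ (fun t (h : (A t <-> B t) /\ B t) => proj2 (proj1 h) (proj2 h)) (UI _ _ H HA)).
Qed.

Lemma U_imp (A B : nat -> Prop) : (U A -> U B) <-> U (fun t => A t -> B t).
Proof.
  split.
  - intro H. destruct (UC A) as [HA | HnA].
    + apply (US B); auto.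
    + apply (US _ _ (fun t (h : ~ A t) (a : A t) => False_ind _ (h a)) HnA).
  - intros H HA. apply (US _ _ (fun t (h : (A t -> B t) /\ A t) => proj1 h (proj2 h)) (UI _ _ H HA)).
Qed.

Lemma U_and (A B : nat -> Prop) : (U A /\ U B) <-> U (fun t => A t /\ B t).
Proof.
  split.
  - intros [HA HB]; apply UI; auto.
  - intro H; split; (eapply US; [|exact H]); intros t h; simpl in h; tauto.
Qed.

Lemma U_or (A B : nat -> Prop) : (U A \/ U B) <-> U (fun t => A t \/ B t).
Proof.
  split.
  - intros [HA | HB]; [apply (US A) | apply (US B)]; auto.
  - intro H. destruct (UC A) as [HA | HnA]; [left; auto | right].
    eapply US; [|exact (UI _ _ H HnA)]; intros t h; simpl in h; tauto.
Qed.

Lemma U_fin n (P : Fin.t n -> nat -> Prop) : (forall i, U (P i)) -> U (fun t => forall i, P i t).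
Proof.
  induction n as [| n IHn]; intros H.
  - apply U_all. intros t i. apply (Fin.case0 (fun i => P i t) i).
  - pose proof (IHn (fun i => P (Fin.FS i)) (fun i => H (Fin.FS i))) as H1.
    pose proof (UI _ _ (H Fin.F1) H1) as H2.
    eapply US; [|exact H2]; intros t h i; simpl in h.
    apply (Fin.caseS' i (fun i => P i t)); [exact (proj1 h) | exact (proj2 h)].
Qed.

Lemma U_list (X : Type) (F : list X) (P : X -> nat -> Prop) :
  (forall x, In x F -> U (P x)) -> U (fun t => forall x, In x F -> P x t).
Proof.
  induction F as [| y F IH]; intros H.
  - apply U_all. intros t x [].
  - pose proof (UI _ _ (H y (or_introl eq_refl)) (IH (fun x hx => H x (or_intror hx)))) as H2.
    eapply US; [|exact H2]; intros t h; simpl in h. intros x [<- | hx]; [exact (proj1 h) | exact (proj2 h x hx)].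
Qed.

Definition ueq (M : Type) (f g : nat -> M) := U (fun t => f t = g t).
Arguments ueq {M} f g.

Lemma ueq_refl (M : Type) (f : nat -> M) : ueq f f.
Proof. apply U_all; reflexivity. Qed.
Lemma ueq_sym (M : Type) (f g : nat -> M) : ueq f g -> ueq g f.
Proof. apply US; auto. Qed.
Lemma ueq_trans (M : Type) (f g h : nat -> M) : ueq f g -> ueq g h -> ueq f h.
Proof. intros H1 H2. apply (US _ _ (fun t (x : f t = g t /\ g t = h t) => eq_trans (proj1 x) (proj2 x)) (UI _ _ H1 H2)). Qed.

Section UP.
Variable S : signature.
Variable M : structure S.

Definition inhM : inhabited (nat -> M) := inhabits (fun _ => dom_inhabited M).
Definition inhM1 : inhabited M := inhabits (dom_inhabited M).

Definition canon (f : nat -> M) : nat -> M := epsilon inhM (fun h => ueq h f).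
Lemma canon_spec f : ueq (canon f) f.
Proof. apply (epsilon_spec inhM (fun h => ueq h f)). exists f; apply ueq_refl. Qed.
Lemma canon_eq f g : ueq f g -> canon f = canon g.
Proof.
  intro H; unfold canon; f_equal; extensionality h; apply propositional_extensionality; split; intros.
  - eapply ueq_trans; eauto.
  - eapply ueq_trans; eauto using ueq_sym.
Qed.

Definition D := {f : nat -> M | canon f = f}.
Definition cls (f : nat -> M) : D := exist _ (canon f) (canon_eq _ _ (canon_spec f)).
Definition rep (x : D) : nat -> M := proj1_sig x.
Lemma rep_cls f : ueq (rep (cls f)) f.
Proof. exact (canon_spec f). Qed.
Lemma D_eq_iff (x y : D) : x = y <-> ueq (rep x) (rep y).
Proof.
  split; [intros ->; apply ueq_refl|].
  destruct x as [f Hf], y as [g Hg]; simpl; intro H.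
  assert (f = g) by (rewrite <- Hf, <- Hg; apply canon_eq; auto). subst g.
  f_equal; apply proof_irrelevance.
Qed.

Definition UP : structure S :=
  {| dom := D; dom_inhabited := cls (fun _ => dom_inhabited M);
     interp_f := fun f args => cls (fun t => interp_f M f (fun i => rep (args i) t));
     interp_r := fun r args => U (fun t => interp_r M r (fun i => rep (args i) t)) |}.

Lemma los_term (a : nat -> UP) (g : nat -> nat -> M) (tm : term S) :
  (forall v, occurs_term v tm -> ueq (rep (a v)) (fun t => g t v)) ->
  ueq (rep (eval UP a tm)) (fun t => eval M (g t) tm).
Proof.
  induction tm as [v | f args IH]; intros H.
  - apply H. simpl. reflexivity.
  - change (ueq (rep (cls (fun t => interp_f M f (fun i => rep (eval UP a (args i)) t))))
               (fun t => interp_f M f (fun i => eval M (g t) (args i)))).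
    eapply ueq_trans; [apply rep_cls|].
    assert (Hi : forall i, ueq (rep (eval UP a (args i))) (fun t => eval M (g t) (args i))).
    { intro i. apply IH. intros v ov. apply H. simpl. exists i; exact ov. }
    eapply US; [|exact (U_fin _ _ Hi)]; intros t h; simpl in h.
    f_equal. extensionality i. apply h.
Qed.


Lemma upd_agree (a : nat -> UP) (g : nat -> nat -> M) v (d : UP) (h : nat -> M) (q : formula S) :
  ueq (rep d) h ->
  (forall w, free_in w (fex v q) -> ueq (rep (a w)) (fun t => g t w)) ->
  forall w, free_in w q -> ueq (rep (update a v d w)) (fun t => update (g t) v (h t) w).
Proof.
  intros Hd H w Hw. unfold update. destruct (Nat.eqb w v) eqn:E.
  - exact Hd.
  - apply H. simpl. split; [|exact Hw]. intro; subst. rewrite Nat.eqb_refl in E. discriminate.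
Qed.

Lemma los (p : formula S) : forall (a : nat -> UP) (g : nat -> nat -> M),
  (forall v, free_in v p -> ueq (rep (a v)) (fun t => g t v)) ->
  (sat UP a p <-> U (fun t => sat M (g t) p)).
Proof.
  induction p as [| t1 t2 | r args | p1 IH1 p2 IH2 | p1 IH1 p2 IH2 | p1 IH1 p2 IH2 | v q IH | v q IH];
    intros a g H.
  - simpl. split; [tauto| intro H0; exfalso; apply UF0; exact H0].
  - change (eval UP a t1 = eval UP a t2 <-> U (fun t => eval M (g t) t1 = eval M (g t) t2)).
    rewrite D_eq_iff.
    assert (E1 := los_term a g t1 (fun v o => H v (or_introl o))).
    assert (E2 := los_term a g t2 (fun v o => H v (or_intror o))).
    split; intro K.
    + eapply ueq_trans; [apply ueq_sym; exact E1|]. eapply ueq_trans; [exact K| exact E2].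
    + eapply ueq_trans; [exact E1|]. eapply ueq_trans; [exact K| apply ueq_sym; exact E2].
  - change (U (fun t => interp_r M r (fun i => rep (eval UP a (args i)) t)) <->
            U (fun t => interp_r M r (fun i => eval M (g t) (args i)))).
    apply U_iff.
    assert (Hi : forall i, ueq (rep (eval UP a (args i))) (fun t => eval M (g t) (args i))).
    { intro i. apply los_term. intros v ov. apply H. simpl. exists i; exact ov. }
    eapply US; [|exact (U_fin _ _ Hi)]; intros t h; simpl in h.
    replace (fun i => rep (eval UP a (args i)) t) with (fun i => eval M (g t) (args i)).
    + tauto.
    + extensionality i. symmetry. apply h.
  - simpl. rewrite (IH1 a g (fun v o => H v (or_introl o))), (IH2 a g (fun v o => H v (or_intror o))).
    apply U_imp.
  - simpl. rewrite (IH1 a g (fun v o => H v (or_introl o))), (IH2 a g (fun v o => H v (or_intror o))).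
    apply U_and.
  - simpl. rewrite (IH1 a g (fun v o => H v (or_introl o))), (IH2 a g (fun v o => H v (or_intror o))).
    apply U_or.
  - simpl. split.
    + intros [d Hd].
      rewrite (IH (update a v d) (fun t => update (g t) v (rep d t))) in Hd.
      * eapply US; [|exact Hd]; intros t h; simpl in h. exists (rep d t); exact h.
      * apply upd_agree; [apply ueq_refl | exact H].
    + intro HU.
      set (h := fun t => epsilon inhM1 (fun d => sat M (update (g t) v d) q)).
      exists (cls h).
      rewrite (IH (update a v (cls h)) (fun t => update (g t) v (h t))).
      * eapply US; [|exact HU]; intros t ht; simpl in ht.
        apply (epsilon_spec inhM1 (fun d => sat M (update (g t) v d) q)). exact ht.
      * apply upd_agree; [apply rep_cls | exact H].
  - simpl. split.
    + intro Hall. destruct (UC (fun t => forall d, sat M (update (g t) v d) q)) as [ok | Hn]; [exact ok|].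
      exfalso.
      set (h := fun t => epsilon inhM1 (fun d => ~ sat M (update (g t) v d) q)).
      specialize (Hall (cls h)).
      rewrite (IH (update a v (cls h)) (fun t => update (g t) v (h t))) in Hall.
      * apply UF0. eapply US; [|exact (UI _ _ Hall Hn)]; intros t [h1 h2].
        apply (epsilon_spec inhM1 (fun d => ~ sat M (update (g t) v d) q)); [|exact h1].
        apply not_all_ex_not; exact h2.
      * apply upd_agree; [apply rep_cls | exact H].
    + intros HU d.
      rewrite (IH (update a v d) (fun t => update (g t) v (rep d t))).
      * eapply US; [|exact HU]; intros t h; simpl in h. apply h.
      * apply upd_agree; [apply ueq_refl | exact H].
Qed.

Lemma UP_model (T : theory S) : is_model M T -> is_model UP T.
Proof.
  intros HM p Tp a.
  apply (proj2 (los p a (fun t v => rep (a v) t) (fun v _ => ueq_refl _ _))).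
  apply U_all. intro t. apply HM; exact Tp.
Qed.

End UP.
End Ultra.

Section Comb.
Variable L : Type.
Variable le : L -> L -> Prop.
Hypothesis Hlin : linear_order le.

Lemma ltL_trans x y z : lt_L le x y -> lt_L le y z -> lt_L le x z.
Proof.
  destruct Hlin as [Hr [Ha [Ht Htot]]].
  intros [h1 n1] [h2 n2]. split; [eauto|].
  intro; subst z. apply n1. apply Ha; auto.
Qed.

Lemma ltL_le_false x y : lt_L le x y -> le y x -> False.
Proof.
  destruct Hlin as [Hr [Ha [Ht Htot]]].
  intros [h1 n1] h2. apply n1; apply Ha; auto.
Qed.

Lemma ltL_total x y : x <> y -> lt_L le x y \/ lt_L le y x.
Proof.
  destruct Hlin as [Hr [Ha [Ht Htot]]].
  intros Hn. destruct (Htot x y); [left|right]; split; auto.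
Qed.

Lemma insert_pos (e : nat -> L) N x :
  (forall a c, a < c < N -> lt_L le (e a) (e c)) -> (forall a, a < N -> e a <> x) ->
  forall K, K <= N -> exists j, j <= K /\ (forall a, a < j -> lt_L le (e a) x) /\
                              (forall a, j <= a < K -> lt_L le x (e a)).
Proof.
  intros Hinc Hne K. induction K as [| K IH]; intros HK.
  - exists 0. split; [lia|]. split; intros; lia.
  - destruct (IH ltac:(lia)) as [j [Hj [H1 H2]]].
    destruct (Nat.eq_dec j K) as [-> | Hjk].
    + destruct (ltL_total (e K) x (Hne K ltac:(lia))) as [Hlt | Hlt].
      * exists (S K). split; [lia|]. split.
        -- intros a Ha. destruct (Nat.eq_dec a K) as [-> | ]; [exact Hlt | apply H1; lia].
        -- intros; lia.
      * exists K. split; [lia|]. split; [exact H1|].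
        intros a Ha. assert (a = K) by lia. subst; exact Hlt.
    + exists j. split; [lia|]. split; [exact H1|].
      intros a Ha. destruct (Nat.eq_dec a K) as [-> | ]; [| apply H2; lia].
      apply ltL_trans with (e (K - 1)); [apply H2; lia | apply Hinc; lia].
Qed.

Lemma fin_chain (f : nat -> L) : (forall m m', f m = f m' -> m = m') ->
  forall N, exists e : nat -> L, (forall a c, a < c < N -> lt_L le (e a) (e c)) /\
                           (forall a, a < N -> exists c, c < N /\ e a = f c).
Proof.
  intros Hf N. induction N as [| N [e [Hinc Him]]].
  - exists f. split; intros; lia.
  - assert (Hne : forall a, a < N -> e a <> f N).
    { intros a Ha Heq. destruct (Him a Ha) as [c [Hc Hec]]. rewrite Hec in Heq.
      apply Hf in Heq. lia. }
    destruct (insert_pos e N (f N) Hinc Hne N (le_n N)) as [j [Hj [H1 H2]]].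
    exists (fun a => if Nat.ltb a j then e a else if Nat.eqb a j then f N else e (a - 1)).
    split.
    + intros a c Hac.
      destruct (Nat.ltb_spec a j), (Nat.eqb_spec a j), (Nat.ltb_spec c j), (Nat.eqb_spec c j);
        try lia.
      * apply Hinc; lia.
      * apply H1; lia.
      * apply Hinc; lia.
      * apply H2; lia.
      * apply Hinc; lia.
    + intros a Ha.
      destruct (Nat.ltb_spec a j), (Nat.eqb_spec a j).
      * lia.
      * destruct (Him a ltac:(lia)) as [c [Hc E]]. exists c; split; [lia|exact E].
      * exists N; split; [lia|reflexivity].
      * destruct (Him (a - 1) ltac:(lia)) as [c [Hc E]]. exists c; split; [lia|exact E].
Qed.

Variable E : nat -> L.
Variable t : nat.
Hypothesis HE : forall a c, a < c < t * t -> lt_L le (E a) (E c).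

Definition ph (p : nat * nat) : L * L := (E (fst p * t + snd p), E (snd p * t + fst p)).

Lemma ph_chain (p q : nat * nat) : fst p < t -> snd p < t -> fst q < t -> snd q < t ->
  ple Nat.le p q -> p <> q -> plt le (ph p) (ph q).
Proof.
  destruct p as [i j], q as [i' j']; unfold ple, plt, ph; simpl.
  intros h1 h2 h3 h4 [h5 h6] hne.
  assert (i < i' \/ j < j') as Hc.
  { destruct (Nat.eq_dec i i'); [|lia]. destruct (Nat.eq_dec j j'); [|lia]. subst; congruence. }
  split; apply HE; destruct Hc; nia.
Qed.

Lemma ph_anti (p q : nat * nat) : fst p < t -> snd p < t -> fst q < t -> snd q < t ->
  fst p < fst q -> snd q < snd p -> ~ ple le (ph p) (ph q) /\ ~ ple le (ph q) (ph p).
Proof.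
  destruct p as [i j], q as [i' j']; unfold ple, ph; simpl.
  intros h1 h2 h3 h4 h5 h6. split; intros [k1 k2].
  - apply (ltL_le_false _ _ (HE (j' * t + i') (j * t + i) ltac:(nia)) k2).
  - apply (ltL_le_false _ _ (HE (i * t + j) (i' * t + j') ltac:(nia)) k1).
Qed.

End Comb.

Lemma nat_anti (p q : nat * nat) : p <> q -> ~ ple Nat.le p q -> ~ ple Nat.le q p ->
  (fst p < fst q /\ snd q < snd p) \/ (fst q < fst p /\ snd p < snd q).
Proof.
  destruct p as [i j], q as [i' j']; unfold ple; simpl. intros hne h1 h2.
  destruct (le_lt_dec i i'), (le_lt_dec j j'), (le_lt_dec i' i), (le_lt_dec j' j); try tauto; try lia.
Qed.

Fixpoint bnd (F : list (nat * nat)) : nat :=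
  match F with [] => 0 | p :: F => fst p + snd p + bnd F end.

Lemma bnd_ge F p : In p F -> fst p + snd p <= bnd F.
Proof. induction F as [| q F IH]; simpl; [tauto|]. intros [-> | h]; [lia| specialize (IH h); lia]. Qed.

Lemma NoDup_map_on (X Y : Type) (g : X -> Y) (F : list X) :
  NoDup F -> (forall x y, In x F -> In y F -> g x = g y -> x = y) -> NoDup (map g F).
Proof.
  induction F as [| x F IH]; intros Hn Hi; simpl; constructor.
  - inversion Hn; subst. intro Hm. apply in_map_iff in Hm. destruct Hm as [y [Hy Iy]].
    assert (y = x) by (apply Hi; simpl; auto). subst; contradiction.
  - inversion Hn; subst. apply IH; auto. intros; apply Hi; simpl; auto.
Qed.

Theorem proposition5p3 (S : signature) (T : theory S) (k n m : nat)
  (phi : formula S) :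
  complete_theory T ->
  (forall v, free_in v phi -> v < n + m) ->
  (has_infinite_k_grid T k n phi <-> has_infinite_strong_k_grid T k n phi).
Proof.
  intros _ _. split.
  2: { intros [L [le [Hl [Hi [M [b [HM [Hg _]]]]]]]].
       exists L, le; split; [exact Hl|]; split; [exact Hi|]. exists M, b; split; assumption. }
  intros [L [le [Hlin [[f Hf] [M [b [HM [Hstrict Hanti]]]]]]]].
  destruct UF.nat_ultra as [U [UT [UI [US [UF0 [UC Ucof]]]]]].
  assert (HE0 : forall t, exists e : nat -> L, forall a c, a < c < t * t -> lt_L le (e a) (e c)).
  { intro t. destruct (fin_chain L le Hlin f Hf (t * t)) as [e [He _]]. exists e; exact He. }
  set (inhL := inhabits (fun _ : nat => f 0)).
  set (E := fun t => epsilon inhL (fun e => forall a c, a < c < t * t -> lt_L le (e a) (e c))).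
  assert (HE : forall t a c, a < c < t * t -> lt_L le (E t a) (E t c)).
  { intro t. apply (epsilon_spec inhL (fun e => forall a c, a < c < t * t -> lt_L le (e a) (e c))).
    apply HE0. }
  set (MU := UP U UT UI US S M).
  set (b' := fun (p : nat * nat) (w : nat) => (cls U UT UI US S M (fun t => b (ph L (E t) t p) w) : MU)).
  assert (Hlinn : linear_order Nat.le).
  { unfold linear_order; repeat split; intros; lia. }
  assert (Hchain : forall C, is_chain Nat.le C -> consistent_family MU n phi b' C).
  { intros C HC F HF.
    set (B := bnd F).
    assert (Hex : forall t, exists a : nat -> M, B < t ->
               forall p, In p F -> sat M (inst M n a (b (ph L (E t) t p))) phi).
    { intro t. destruct (le_lt_dec t B) as [Ht | Ht].
      - exists (fun _ => dom_inhabited M). intro; lia.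
      - destruct (Hstrict (fun q => exists p, In p F /\ q = ph L (E t) t p)) with (F := map (ph L (E t) t) F)
          as [a Ha].
        + intros q1 q2 [p1 [I1 ->]] [p2 [I2 ->]] Hne.
          assert (p1 <> p2) by (intro; subst; congruence).
          pose proof (bnd_ge F p1 I1). pose proof (bnd_ge F p2 I2).
          destruct (HC p1 p2 (HF p1 I1) (HF p2 I2)); [left | right];
            apply ph_chain; auto; lia.
        + intros q Hq. apply in_map_iff in Hq. destruct Hq as [p [<- Ip]]. exists p; auto.
        + exists a. intros _ p Ip. apply Ha. apply in_map; exact Ip. }
    set (inhA := inhabits (fun _ : nat => dom_inhabited M)).
    set (h := fun t => epsilon inhA (fun a : nat -> M => B < t ->
               forall p, In p F -> sat M (inst M n a (b (ph L (E t) t p))) phi)).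
    exists (fun v => (cls U UT UI US S M (fun t => h t v) : MU)).
    intros p Ip.
    refine (proj2 (los U UT UI US UF0 UC S M phi _ (fun t => inst M n (h t) (b (ph L (E t) t p))) _) _).
    2: { eapply US; [|exact (Ucof (B + 1))]. intros t Ht; cbv beta in Ht.
      apply (epsilon_spec inhA (fun a : nat -> M => B < t ->
               forall p, In p F -> sat M (inst M n a (b (ph L (E t) t p))) phi)); [apply Hex| lia | exact Ip]. }
    intros v _. unfold inst. destruct (Nat.ltb v n); apply rep_cls. }
  exists nat, Nat.le. split; [exact Hlinn|]. split; [exists (fun x => x); auto|].
  exists MU, b'. split; [exact (UP_model U UT UI US UF0 UC S M T HM)|].
  split; [split|exact Hchain].
  - intros C HC. apply Hchain. intros p q Cp Cq.
    destruct (classic (p = q)) as [-> | Hne].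
    + left; split; apply le_n.
    + destruct (HC p q Cp Cq Hne) as [[[h1 _] [h2 _]] | [[h1 _] [h2 _]]]; [left|right]; split; assumption.
  - intros A HA F HND Hlen HFA [a' Ha'].
    set (B := bnd F).
    assert (Hp : forall p, In p F -> U (fun t => sat M (inst M n (fun v => rep U S M (a' v) t) (b (ph L (E t) t p))) phi)).
    { intros p Ip.
      refine (proj1 (los U UT UI US UF0 UC S M phi _ _ _) (Ha' p Ip)).
      intros v _. unfold inst. destruct (Nat.ltb v n); [apply ueq_refl; assumption | apply rep_cls]. }
    pose proof (UI _ _ (U_list U UT UI US _ F _ Hp) (Ucof (B + 1))) as Hall.
    destruct (classic (exists t, (forall p, In p F -> sat M (inst M n (fun v => rep U S M (a' v) t) (b (ph L (E t) t p))) phi) /\ B + 1 <= t)) as [[t [Ht HtB]] | Hno].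
    2: { apply UF0. eapply US; [|exact Hall]. intros t Ht. apply Hno; exists t; exact Ht. }
    assert (Hbd : forall p, In p F -> fst p < t /\ snd p < t).
    { intros p Ip; pose proof (bnd_ge F p Ip); unfold B in HtB; lia. }
    assert (Hanti2 : forall p1 p2, In p1 F -> In p2 F -> p1 <> p2 ->
              ~ ple le (ph L (E t) t p1) (ph L (E t) t p2) /\ ~ ple le (ph L (E t) t p2) (ph L (E t) t p1)).
    { intros p1 p2 I1 I2 Hne.
      destruct (HA p1 p2 (HFA p1 I1) (HFA p2 I2) Hne) as [n1 n2].
      destruct (Hbd p1 I1), (Hbd p2 I2).
      destruct (nat_anti p1 p2 Hne n1 n2) as [[c1 c2] | [c1 c2]].
      - apply ph_anti; auto.
      - destruct (ph_anti L le Hlin (E t) t (HE t) p2 p1); auto. }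
    refine (Hanti (fun q => exists p, In p F /\ q = ph L (E t) t p) _ (map (ph L (E t) t) F) _ _ _ _).
    + intros q1 q2 [p1 [I1 ->]] [p2 [I2 ->]] Hne.
      apply Hanti2; auto. intro; subst; congruence.
    + apply NoDup_map_on; [exact HND|].
      intros p1 p2 I1 I2 Heq. destruct (classic (p1 = p2)) as [|Hne]; [assumption|].
      exfalso. destruct (Hanti2 p1 p2 I1 I2 Hne) as [K _]. apply K. rewrite Heq.
      destruct Hlin as [Hr _]. split; apply Hr.
    + rewrite length_map; exact Hlen.
    + intros q Hq. apply in_map_iff in Hq. destruct Hq as [p [<- Ip]]. exists p; auto.
    + exists (fun v => rep U S M (a' v) t). intros q Hq. apply in_map_iff in Hq.
      destruct Hq as [p [<- Ip]]. apply Ht; exact Ip.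
Qed.
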